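(* Let $M$ be a JBW$^*$-triple and $T:M\to M$ a bounded linear map which is triple derivable at orthogonal pairs. For each tripotent $e\in M$ put $\xi_e:=\tfrac12\big(P_2(e)T(e)+Q(e)T(e)\big)\in M_2(e)$. Let $e_1,\dots,e_{m_1}$ and $v_1,\dots,v_{m_2}$ be two families of mutually orthogonal tripotents in $M$ and $\lambda_j,\mu_k>0$ with $\sum_{j=1}^{m_1}\lambda_je_j=\sum_{k=1}^{m_2}\mu_kv_k$. Then $\sum_{j=1}^{m_1}\lambda_j\xi_{e_j}=\sum_{k=1}^{m_2}\mu_k\xi_{v_k}$.
   Context: A JB$^*$-triple is a complex Banach space with a continuous triple product $\{\cdot,\cdot,\cdot\}$, bilinear and symmetric in the outer variables and conjugate-linear in the middle one, satisfying the Jordan identity $L(a,b)L(x,y)=L(x,y)L(a,b)+L(L(a,b)x,y)-L(x,L(b,a)y)$, with $L(a,a)$ hermitian of non-negative spectrum and $\|\{a,a,a\}\|=\|a\|^3$, where $L(a,b)x=\{a,b,x\}$; a JBW$^*$-triple is a JB$^*$-triple that is a dual Banach space. Elements $a,b$ are orthogonal ($a\perp b$) if $L(a,b)=0$. A linear map $T$ is triple derivable at orthogonal pairs if $\{T(a),b,c\}+\{a,T(b),c\}+\{a,b,T(c)\}=0$ for all $a,b,c$ with $a\perp b$. A tripotent is $e$ with $\{e,e,e\}=e$; $M_2(e)=\{x:\{e,e,x\}=x\}$, $P_2(e)$ is the Peirce-2 projection, $Q(e)x=\{e,x,e\}$. (By the paper's results, $\xi_e$ is the unique self-adjoint central element of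 the JB$^*$-algebra $M_2(e)$, with product $x\circ_e y=\{x,e,y\}$ and involution $x^{*_e}=\{e,x,e\}$, such that $P_2(e)T(a)-\xi_e\circ_e a$ is a triple derivation of $M_2(e)$.) *)

(* Defs.v *)
From mathcomp Require Import all_boot all_order all_algebra.
From mathcomp Require Import all_classical all_reals all_analysis.
From mathcomp.real_closed Require Export complex.
Import Order.TTheory GRing.Theory Num.Theory.
Import numFieldNormedType.Exports.
Local Open Scope ring_scope.

Set Implicit Arguments.
Unset Strict Implicit.
Unset Printing Implicit Defensive.

Section JBTriples.
Variable R : realType.
Local Notation C := R[i].
Variable X : completeNormedModType C.

Definition bounded_op (S : X -> X) : Prop := linear S /\ continuous S.

Definition invertible_op (S : X -> X) : Prop :=
  exists U : X -> X, bounded_op U /\ cancel S U /\ cancel U S.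

Definition spectrum (S : X -> X) (lam : C) : Prop :=
  ~ invertible_op (fun x => S x - lam *: x).

Definition state_pair (x : X) (phi : X -> C) : Prop :=
  [/\ linear phi, continuous (phi : X -> C^o), `|x| = 1,
      (forall y, `|phi y| <= `|y|) & phi x = 1].

(* (spatial) numerical range and hermitian operators (Vidav-Lumer) *)
Definition numerical_range (S : X -> X) (z : C) : Prop :=
  exists x phi, state_pair x phi /\ z = phi (S x).

Definition hermitian (S : X -> X) : Prop :=
  bounded_op S /\ forall z, numerical_range S z -> z \is Num.real.

(* X is (isometrically isomorphic to) the dual of some complex Banach
   space Y, via J : X -> Y^* *)
Definition is_dual_Banach_space : Prop :=
  exists (Y : completeNormedModType C) (J : X -> Y -> C),
    [/\ (forall x, linear (J x) /\ continuous (J x : Y -> C^o)),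
        (forall (a : C) x x' y, J (a *: x + x') y = a * J x y + J x' y),
        (forall f : Y -> C, linear f -> continuous (f : Y -> C^o) -> exists x, J x = f),
        (forall x y, `|J x y| <= `|x| * `|y|) &
        (forall x (eps : C), 0 < eps ->
           exists y : Y, `|y| <= 1 /\ `|x| - eps < `|J x y|)].

Definition Lop (tp : X -> X -> X -> X) (a b : X) : X -> X := tp a b.

Definition is_JB_triple (tp : X -> X -> X -> X) : Prop :=
  [/\
      (forall (s : C) x x' y z, tp (s *: x + x') y z = s *: tp x y z + tp x' y z),
      (forall x y z, tp x y z = tp z y x),
      (forall (s : C) x y y' z, tp x (s *: y + y') z = s^* *: tp x y z + tp x y' z),
      continuous (fun p : X * X * X => tp p.1.1 p.1.2 p.2) &
    [/\
      (forall a b x y w,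
         Lop tp a b (Lop tp x y w) =
           Lop tp x y (Lop tp a b w) + Lop tp (Lop tp a b x) y w
           - Lop tp x (Lop tp b a y) w),
      (forall a, hermitian (Lop tp a a)),
      (forall a (lam : C), spectrum (Lop tp a a) lam -> 0 <= lam) &
      (forall a, `|tp a a a| = `|a| ^+ 3)]].

Definition is_JBW_triple (tp : X -> X -> X -> X) : Prop :=
  is_JB_triple tp /\ is_dual_Banach_space.

Definition triple_orth (tp : X -> X -> X -> X) (a b : X) : Prop :=
  forall x, tp a b x = 0.

Definition triple_derivable_at_orth (tp : X -> X -> X -> X) (T : X -> X) : Prop :=
  forall a b c, triple_orth tp a b ->
    tp (T a) b c + tp a (T b) c + tp a b (T c) = 0.

Definition tripotent (tp : X -> X -> X -> X) (e : X) : Prop := tp e e e = e.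

Definition Qop (tp : X -> X -> X -> X) (e : X) (x : X) : X := tp e x e.

(* Peirce-2 projection P_2(e) = Q(e)^2 *)
Definition P2 (tp : X -> X -> X -> X) (e : X) (x : X) : X :=
  Qop tp e (Qop tp e x).

Definition xi (tp : X -> X -> X -> X) (T : X -> X) (e : X) : X :=
  (2 : C)^-1 *: (P2 tp e (T e) + Qop tp e (T e)).

End JBTriples.

(* Main.v *)
Require Import Defs.
From mathcomp Require Import all_boot all_order all_algebra.
From mathcomp Require Import all_classical all_reals all_analysis.
From mathcomp.real_closed Require Import complex.
Import Order.TTheory GRing.Theory Num.Theory.
Import numFieldNormedType.Exports.
Local Open Scope ring_scope.
Set Implicit Arguments.
Unset Strict Implicit.

Section Alg.
Variables (R : realType) (M : completeNormedModType R[i]) (tp : M -> M -> M -> M).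
Hypothesis Hl : forall (s : R[i]) x x' y z, tp (s *: x + x') y z = s *: tp x y z + tp x' y z.
Hypothesis Hs : forall x y z, tp x y z = tp z y x.
Hypothesis Hm : forall (s : R[i]) x y y' z, tp x (s *: y + y') z = s^* *: tp x y z + tp x y' z.
Hypothesis HJ : forall a b x y w,
  tp a b (tp x y w) = tp x y (tp a b w) + tp (tp a b x) y w - tp x (tp b a y) w.

Lemma conj_realC (r : R) : ((r%:C)%C)^* = (r%:C)%C.
Proof. exact: conjc_real. Qed.

Lemma conj1C : (1 : R[i])^* = 1.
Proof. exact: conjc1. Qed.

Lemma tpDl x x' y z : tp (x + x') y z = tp x y z + tp x' y z.
Proof. by rewrite -[x]scale1r Hl !scale1r. Qed.
Lemma tp0l y z : tp 0 y z = 0.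
Proof. by apply/eqP; rewrite -[X in X == _](addrK (tp 0 y z)) -tpDl addr0 subrr. Qed.
Lemma tpZl s x y z : tp (s *: x) y z = s *: tp x y z.
Proof. by rewrite -[s *: x]addr0 Hl tp0l addr0. Qed.
Lemma tpNl x y z : tp (- x) y z = - tp x y z.
Proof. by rewrite -scaleN1r tpZl scaleN1r. Qed.
Lemma tpBl x x' y z : tp (x - x') y z = tp x y z - tp x' y z.
Proof. by rewrite tpDl tpNl. Qed.
Lemma tpDr x y z z' : tp x y (z + z') = tp x y z + tp x y z'.
Proof. by rewrite Hs tpDl !(Hs _ _ x). Qed.
Lemma tp0r x y : tp x y 0 = 0.
Proof. by rewrite Hs tp0l. Qed.
Lemma tpZr s x y z : tp x y (s *: z) = s *: tp x y z.
Proof. by rewrite Hs tpZl Hs. Qed.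
Lemma tpNr x y z : tp x y (- z) = - tp x y z.
Proof. by rewrite Hs tpNl Hs. Qed.
Lemma tpDm x y y' z : tp x (y + y') z = tp x y z + tp x y' z.
Proof. by rewrite -[y]scale1r Hm conj1C !scale1r. Qed.
Lemma tp0m x z : tp x 0 z = 0.
Proof. by apply/eqP; rewrite -[X in X == _](addrK (tp x 0 z)) -tpDm addr0 subrr. Qed.
Lemma tpNm x y z : tp x (- y) z = - tp x y z.
Proof. by apply/eqP; rewrite -subr_eq0 opprK -tpDm addNr tp0m. Qed.
Lemma tpRm x (r : R) y z : tp x ((r%:C)%C *: y) z = (r%:C)%C *: tp x y z.
Proof. by rewrite -[_ *: y]addr0 Hm tp0m addr0 conj_realC. Qed.

Lemma tp_suml I (r : seq I) (P : pred I) F y z :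
  tp (\sum_(i <- r | P i) F i) y z = \sum_(i <- r | P i) tp (F i) y z.
Proof. exact: (big_morph (fun x => tp x y z) (fun a b => tpDl a b y z) (tp0l y z)). Qed.
Lemma tp_sumr I (r : seq I) (P : pred I) F x y :
  tp x y (\sum_(i <- r | P i) F i) = \sum_(i <- r | P i) tp x y (F i).
Proof. exact: (big_morph (fun z => tp x y z) (fun a b => tpDr x y a b) (tp0r x y)). Qed.
Lemma tp_summ I (r : seq I) (P : pred I) F x z :
  tp x (\sum_(i <- r | P i) F i) z = \sum_(i <- r | P i) tp x (F i) z.
Proof. exact: (big_morph (fun y => tp x y z) (fun a b => tpDm x a b z) (tp0m x z)). Qed.


Section Pair.
Variables e f : M.
Hypothesis oef : forall x, tp e f x = 0.
Hypothesis ofe : forall x, tp f e x = 0.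
Hypothesis tf : tp f f f = f.

Lemma oef' x : tp x f e = 0. Proof. by rewrite Hs oef. Qed.
Lemma ofe' x : tp x e f = 0. Proof. by rewrite Hs ofe. Qed.

Lemma L4a y : tp e (tp e y e) f = 0.
Proof.
have := HJ y e e e f.
by rewrite (Hs e e f) ofe tp0r ofe' tp0r ofe' add0r sub0r => /eqP; rewrite eq_sym oppr_eq0 => /eqP.
Qed.

Lemma L4b y : tp f (tp e y e) f = 0.
Proof.
have := HJ y e f e f.
by rewrite !ofe' !ofe ?tp0r ?tp0l add0r sub0r => /eqP; rewrite eq_sym oppr_eq0 => /eqP.
Qed.

Lemma L5a y : tp e (tp e y f) e = 0.
Proof.
have := HJ y e e f e.
by rewrite oef tp0r oef oef' add0r sub0r => /eqP; rewrite eq_sym oppr_eq0 => /eqP.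
Qed.

Lemma L5b y : tp f (tp e y f) f = 0.
Proof.
have := HJ y e f f f.
by rewrite tf ofe' tp0r tp0l add0r sub0r => /eqP; rewrite eq_sym oppr_eq0 => /eqP.
Qed.

Lemma L6 y : tp e (tp e y f) f = tp f f (tp e e y).
Proof.
have := HJ y e e f f.
rewrite oef tp0r oef add0r => /eqP; rewrite eq_sym subr_eq add0r => /eqP <-.
by rewrite Hs (Hs y).
Qed.

Lemma L8 w : tp e e (tp f f w) = tp f f (tp e e w).
Proof.
by rewrite HJ (Hs e e f) ofe tp0l tp0m addr0 subr0.
Qed.

Variables a b : M.
Hypothesis d1 : forall c, tp a f c = - tp e b c.
Hypothesis d2 : tp b e e = - tp f a e.

Lemma half : (tp f f (tp e e b)) *+ 2 = - tp e a f.
Proof.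
have h1 : tp e e b = - tp e a f by rewrite Hs d2 Hs.
have h2 : tp f f a = - tp e b f by rewrite Hs d1.
have h9 : tp f f (tp e a f) = tp e a f - tp e (tp f f a) f.
  by rewrite HJ tf (Hs f f e) oef tp0l addr0.
have h6 := L6 b.
have : tp f f (tp e e b) = - tp e a f - tp f f (tp e e b).
  rewrite {1}h1 tpNr h9 h2 tpNm h6 opprB.
  by rewrite addrC.
move=> h; apply/eqP; rewrite mulr2n -subr_eq0 opprK; apply/eqP.
rewrite {1}h.
by rewrite subrK addNr.
Qed.

End Pair.

Section XiPair.
Variable T : M -> M.
Hypothesis Tadd : forall x y, T (x + y) = T x + T y.
Hypothesis Hder : triple_derivable_at_orth tp T.
Variables e f : M.
Hypothesis oef : forall x, tp e f x = 0.
Hypothesis ofe : forall x, tp f e x = 0.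
Hypothesis te : tp e e e = e.
Hypothesis tf : tp f f f = f.

Lemma Qsum y : tp (e + f) y (e + f) = tp e y e + tp f y f + (tp e y f) *+ 2.
Proof.
rewrite tpDl !tpDr (Hs f y e) mulr2n.
by rewrite [tp e y f + tp f y f]addrC addrACA.
Qed.

Lemma xi_pair : xi tp T (e + f) = xi tp T e + xi tp T f.
Proof.
rewrite /xi /P2 /Qop -scalerDr; congr (_ *: _).
rewrite Tadd; set a := T e; set b := T f.
have Qe_b : tp e b e = 0.
  have := Hder e oef; rewrite oef addr0 (Hs a f e) oef add0r; exact.
have Qf_a : tp f a f = 0.
  have := Hder f ofe; rewrite ofe addr0 (Hs b e f) ofe add0r; exact.
have d1 c : tp a f c = - tp e b c.
  by have := Hder c oef; rewrite oef addr0 => /eqP; rewrite addr_eq0 => /eqP.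
have d1' c : tp b e c = - tp f a c.
  by have := Hder c ofe; rewrite ofe addr0 => /eqP; rewrite addr_eq0 => /eqP.
have hQ : tp (e + f) (a + b) (e + f) = tp e a e + tp f b f + (tp e (a + b) f) *+ 2.
  by rewrite Qsum !tpDm Qe_b Qf_a addr0 add0r.
have [A eA] : exists A, A = a + b by eexists.
rewrite -eA in hQ *.
have z1 y : tp e (tp f y f) e = 0 by apply: L4b.
have z2 y : tp e (tp e y f) e = 0 by apply: L5a.
have z3 y : tp f (tp e y e) f = 0 by apply: L4b.
have z4 y : tp f (tp e y f) f = 0 by apply: L5b.
have z5 y : tp e (tp e y e) f = 0 by apply: L4a.
have z6 y : tp e (tp f y f) f = 0 by rewrite Hs; apply: L4a.
have hP : tp (e + f) (tp (e + f) A (e + f)) (e + f)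
   = tp e (tp e a e) e + tp f (tp f b f) f + (tp e (tp e A f) f) *+ 4.
  rewrite hQ Qsum !tpDm !z1 !z2 !z3 !z4 !z5 !z6 !addr0 !add0r.
  by rewrite -!mulr2n -mulrnA.
have h2X : (tp e (tp e A f) f) *+ 2 = - tp e A f.
  rewrite (@L6 e f) // eA !tpDr mulrnDl -(@L8 e f) //.
  rewrite (@half f e ofe te b a d1' (d1 f)).
  rewrite (@half e f oef tf a b d1 (d1' e)).
  by rewrite (Hs f b e) tpDm opprD addrC.
have hK : (tp e (tp e A f) f) *+ 4 + (tp e A f) *+ 2 = 0.
  by rewrite (_ : 4 = 2 * 2)%N // mulrnA h2X -mulrnDl addNr mul0rn.
rewrite hP hQ addrACA [X in X + _ = _]addrACA.
by rewrite hK addr0.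
Qed.

End XiPair.

Lemma trip_add x y : (forall z, tp x y z = 0) -> (forall z, tp y x z = 0) ->
  tp x x x = x -> tp y y y = y -> tp (x + y) (x + y) (x + y) = x + y.
Proof.
move=> oxy oyx tx ty.
rewrite !tpDl !tpDm !oxy !oyx !addr0 !add0r !tpDr (Hs x x y) (Hs y y x) oxy oyx.
by rewrite tx ty addr0 add0r.
Qed.

Section Fam.
Variable T : M -> M.
Hypothesis Tadd : forall x y, T (x + y) = T x + T y.
Hypothesis Hder : triple_derivable_at_orth tp T.
Variables (m : nat) (e : 'I_m -> M).
Hypothesis He : forall j, tp (e j) (e j) (e j) = e j.
Hypothesis Ho : forall j j', j != j' -> triple_orth tp (e j) (e j').

Lemma fam_orth (r : seq 'I_m) k : k \notin r ->
  (forall x, tp (e k) (\sum_(j <- r) e j) x = 0) /\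
  (forall x, tp (\sum_(j <- r) e j) (e k) x = 0).
Proof.
move=> kr; split=> x; rewrite ?tp_summ ?tp_suml; apply: big1_seq => j /andP[_ jr];
  apply: Ho; apply/eqP => kj; first by rewrite kj jr in kr.
by rewrite -kj jr in kr.
Qed.

Lemma xi0 : xi tp T 0 = 0.
Proof. by rewrite /xi /P2 /Qop !tp0l addr0 scaler0. Qed.

Lemma fam_xi (r : seq 'I_m) : uniq r ->
  tp (\sum_(j <- r) e j) (\sum_(j <- r) e j) (\sum_(j <- r) e j) = \sum_(j <- r) e j /\
  xi tp T (\sum_(j <- r) e j) = \sum_(j <- r) xi tp T (e j).
Proof.
elim: r => [|j r IH] /=; first by rewrite !big_nil tp0l xi0.
move=> /andP[jr ur]; have [t1 x1] := IH ur.
have [hj1 hj2] := fam_orth jr.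
rewrite !big_cons; split; first exact: trip_add.
by rewrite xi_pair // x1.
Qed.

End Fam.

Section Eig.
Variables (m : nat) (e : 'I_m -> M) (c : 'I_m -> R).
Hypothesis He : forall j, tp (e j) (e j) (e j) = e j.
Hypothesis Ho : forall j j', j != j' -> triple_orth tp (e j) (e j').

Lemma eig k : tp (\sum_j (c j)%:C%C *: e j) (\sum_j (c j)%:C%C *: e j) (e k)
  = ((c k) ^+ 2)%:C%C *: e k.
Proof.
set S := \sum_j _.
have H1 j : tp (e k) S (e j) = if j == k then (c k)%:C%C *: e k else 0.
  rewrite /S tp_summ (bigD1 k) //= big1 => [|i ik]; last first.
    have ki : k != i by rewrite eq_sym.
    by rewrite tpRm (Ho ki) scaler0.
  rewrite addr0 tpRm; case: eqP => [->|/eqP jk]; first by rewrite He.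
  by rewrite Hs (Ho jk) scaler0.
rewrite tp_suml (bigD1 k) //= big1 => [|j jk]; last first.
  by rewrite tpZl Hs H1 (negbTE jk) scaler0.
by rewrite addr0 tpZl H1 eqxx scalerA -rmorphM expr2.
Qed.
End Eig.

Section Interp.
Variable L : M -> M.
Hypothesis LD : forall x y, L (x + y) = L x + L y.
Hypothesis LZ : forall (k : R[i]) x, L (k *: x) = k *: L x.

Lemma scCA (a b : R[i]) (v : M) : a *: (b *: v) = b *: (a *: v).
Proof. by rewrite !scalerA mulrC. Qed.

Lemma rCM (a b : R) : ((a%:C)%C * (b%:C)%C) = ((a * b)%:C)%C.
Proof. by rewrite rmorphM. Qed.
Lemma rCB (a b : R) : ((a%:C)%C - (b%:C)%C) = ((a - b)%:C)%C.
Proof. by rewrite rmorphB. Qed.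

Definition Fop (s : R) (l : seq R) (x : M) : M :=
  foldr (fun t y => ((s ^+ 2 - t ^+ 2)^-1)%:C%C *: (L y - (t ^+ 2)%:C%C *: y)) x l.

Lemma Fop_D s l x y : Fop s l (x + y) = Fop s l x + Fop s l y.
Proof.
elim: l => //= t l IH; rewrite IH LD -scalerDr; congr (_ *: _).
by rewrite scalerDr opprD addrACA.
Qed.

Lemma Fop_Z s l (k : R[i]) x : Fop s l (k *: x) = k *: Fop s l x.
Proof.
elim: l => //= t l IH.
by rewrite IH LZ (scCA _ k) -scalerBr scCA.
Qed.

Lemma Fop_0 s l : Fop s l 0 = 0.
Proof. by have := Fop_Z s l 0 0; rewrite !scale0r. Qed.

Lemma Fop_sum s l I (r : seq I) (P : pred I) (F : I -> M) :
  Fop s l (\sum_(i <- r | P i) F i) = \sum_(i <- r | P i) Fop s l (F i).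
Proof. exact: (big_morph (Fop s l) (Fop_D s l) (Fop_0 s l)). Qed.

Lemma Fop_eig s l x (cx : R) : L x = (cx ^+ 2)%:C%C *: x ->
  Fop s l x = (\prod_(t <- l) ((s ^+ 2 - t ^+ 2)^-1 * (cx ^+ 2 - t ^+ 2)))%:C%C *: x.
Proof.
move=> Lx; elim: l => [|t l IH] /=; first by rewrite big_nil scale1r.
rewrite IH LZ Lx big_cons !scalerA !rCM -scalerBl rCB scalerA rCM.
congr ((_ : R)%:C%C *: _).
by rewrite -mulrA; congr (_ * _); rewrite [t ^+ 2 * _]mulrC -mulrBr mulrC.
Qed.

Lemma Fop_sel (S : seq R) s x (cx : R) : L x = (cx ^+ 2)%:C%C *: x ->
  (forall t, t \in S -> 0 < t) -> cx \in S -> 0 < s ->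
  Fop s [seq t <- S | t != s] x = if cx == s then x else 0.
Proof.
move=> Lx Spos cS s0; rewrite (Fop_eig s _ Lx).
case: eqP => [->|/eqP cs].
  rewrite big_seq big1 ?scale1r // => t; rewrite mem_filter => /andP[ts tS].
  rewrite mulVf // subr_eq0; apply: contra ts => /eqP h.
  have t0 := Spos t tS.
  by rewrite -(@eqrXn2 _ 2 t s) ?ltW // h.
rewrite (big_rem cx) /=; last by rewrite mem_filter cs.
by rewrite subrr mulr0 mul0r scale0r.
Qed.

End Interp.
End Alg.

Lemma regroup (R : realType) (M : lmodType R[i]) m (c : 'I_m -> R) (X : 'I_m -> M)
  (S : seq R) : uniq S -> (forall j, c j \in S) ->
  \sum_j (c j)%:C%C *: X j = \sum_(s <- S) (s%:C)%C *: \sum_(j | c j == s) X j.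
Proof.
move=> uS cS; symmetry.
under eq_bigr => s _ do rewrite scaler_sumr big_mkcond.
rewrite exchange_big /=; apply: eq_bigr => j _.
rewrite (big_rem (c j)) ?cS //= eqxx big1_seq ?addr0 // => s /andP[_ sr].
by case: eqP => // cjs; move: sr; rewrite -cjs mem_rem_uniqF.
Qed.

Lemma sel_sum (R : realType) (M : lmodType R[i]) m (c : 'I_m -> R) (X : 'I_m -> M) s :
  \sum_j (c j)%:C%C *: (if c j == s then X j else 0) = (s%:C)%C *: \sum_(j | c j == s) X j.
Proof.
rewrite scaler_sumr [RHS]big_mkcond; apply: eq_bigr => j _.
by case: eqP => [->|]; rewrite ?scaler0.
Qed.

Unset Implicit Arguments.
Set Strict Implicit.

Theorem mainTheorem13 (R : realType) (M : completeNormedModType R[i])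
    (tp : M -> M -> M -> M) (T : M -> M)
    (m1 m2 : nat) (e : 'I_m1 -> M) (v : 'I_m2 -> M)
    (lam : 'I_m1 -> R) (mu : 'I_m2 -> R) :
  is_JBW_triple tp ->
  bounded_op T ->
  triple_derivable_at_orth tp T ->
  (forall j, tripotent tp (e j)) ->
  (forall j j', j != j' -> triple_orth tp (e j) (e j')) ->
  (forall k, tripotent tp (v k)) ->
  (forall k k', k != k' -> triple_orth tp (v k) (v k')) ->
  (forall j, 0 < lam j) ->
  (forall k, 0 < mu k) ->
  \sum_(j < m1) ((lam j)%:C)%C *: e j = \sum_(k < m2) ((mu k)%:C)%C *: v k ->
  \sum_(j < m1) ((lam j)%:C)%C *: xi tp T (e j)
    = \sum_(k < m2) ((mu k)%:C)%C *: xi tp T (v k).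
Proof.
move=> [[Hl Hs Hm Hc [HJ _ _ _]] _] [Tlin _] Hder He Ho Hv Hov lam0 mu0 Hsum.
have Tadd x y : T (x + y) = T x + T y by have := Tlin 1 x y; rewrite !scale1r.
set S := undup ([seq lam j | j <- enum 'I_m1] ++ [seq mu k | k <- enum 'I_m2]).
have Spos t : t \in S -> 0 < t.
  by rewrite mem_undup mem_cat => /orP[] /mapP[j _ ->].
have lS j : lam j \in S by rewrite mem_undup mem_cat map_f ?mem_enum.
have mS k : mu k \in S by rewrite mem_undup mem_cat orbC map_f ?mem_enum.
have G s : 0 < s -> \sum_(j | lam j == s) e j = \sum_(k | mu k == s) v k.
  move=> s0.
  set a := \sum_(j < m1) ((lam j)%:C)%C *: e j.
  pose L := tp a a.
  have LD x y : L (x + y) = L x + L y by rewrite /L tpDr.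
  have LZ (k : R[i]) x : L (k *: x) = k *: L x by rewrite /L tpZr.
  have eL j : L (e j) = ((lam j) ^+ 2)%:C%C *: e j by apply: eig.
  have vL k : L (v k) = ((mu k) ^+ 2)%:C%C *: v k by rewrite /L /a Hsum; apply: eig.
  have h1 := congr1 (Fop L s [seq t <- S | t != s]) Hsum.
  rewrite !Fop_sum // in h1.
  rewrite (eq_bigr (fun j => (lam j)%:C%C *: (if lam j == s then e j else 0))) in h1;
    last by move=> j _; rewrite Fop_Z // (Fop_sel LZ (eL j) Spos (lS j) s0).
  rewrite [RHS](eq_bigr (fun k => (mu k)%:C%C *: (if mu k == s then v k else 0))) in h1;
    last by move=> k _; rewrite Fop_Z // (Fop_sel LZ (vL k) Spos (mS k) s0).
  rewrite !sel_sum in h1.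
  apply: (scalerI _ h1); apply/negP => /eqP [] /eqP; by rewrite gt_eqF.
rewrite (regroup _ (undup_uniq _) lS) (regroup _ (undup_uniq _) mS).
apply: eq_big_seq => s sS; congr (_ *: _).
have X1 : \sum_(j | lam j == s) xi tp T (e j) = xi tp T (\sum_(j | lam j == s) e j).
  rewrite -(big_filter _ (fun j => lam j == s) (fun j => xi tp T (e j))).
  rewrite -(big_filter _ (fun j => lam j == s) e); symmetry.
  exact: (fam_xi Hl Hs Hm HJ Tadd Hder He Ho (filter_uniq _ (index_enum_uniq _))).2.
have X2 : \sum_(k | mu k == s) xi tp T (v k) = xi tp T (\sum_(k | mu k == s) v k).
  rewrite -(big_filter _ (fun k => mu k == s) (fun k => xi tp T (v k))).
  rewrite -(big_filter _ (fun k => mu k == s) v); symmetry.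
  exact: (fam_xi Hl Hs Hm HJ Tadd Hder Hv Hov (filter_uniq _ (index_enum_uniq _))).2.
by rewrite X1 X2 G // Spos.
Qed.
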